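(* Let $n\ge1$ and let $\mathcal{T}_n$ be the set of complete monotone triangles with $n$ rows. For $A=(a_{i,j})\in\mathcal{T}_n$ define arrays $\mathrm{AD}(A)=(b_{i,j})$, $\mathrm{R}(A)=(c_{i,j})$ and $\mathrm{H}(A)=(d_{i,j})$, $1\le i\le j\le n$, by: $b_{i,j}$ = the number of entries $x$ of the $j$-th SE-diagonal of $A$ with $x\ge i$; $c_{i,j}$ = the number of entries $x$ of the $(n+1-j)$-th NE-diagonal of $A$ with $x\le n+1-i$; $\mathrm{H}(A)$ is the array determined by the condition that for every $i\in\{1,\ldots,n\}$, $\{a_{i,i},a_{i,i+1},\ldots,a_{i,n}\}\cup\{d_{n+2-i,n+2-i},d_{n+2-i,n+3-i},\ldots,d_{n+2-i,n}\}=\{1,2,\ldots,n\}$ (for $i=1$ the second set is empty). Then $\mathrm{AD}$, $\mathrm{R}$ and $\mathrm{H}$ are well-defined permutations of $\mathcal{T}_n$, and $\mathrm{AD}=\mathrm{H}\circ\mathrm{R}$.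
   Context: A monotone triangle with $n$ rows is an array of integers $(a_{i,j})_{1\le i\le j\le n}$ such that $a_{i,j}\le a_{i+1,j+1}$ for $1\le i\le j<n$, $a_{i,j}\le a_{i-1,j}$ for $1<i\le j\le n$, and $a_{i,j}<a_{i,j+1}$ for $1\le i\le j\le n-1$. Its $i$-th row (counted from the bottom) is $(a_{i,i},\ldots,a_{i,n})$. It is complete if its bottom row $(a_{1,1},\ldots,a_{1,n})$ equals $(1,2,\ldots,n)$. For $1\le l\le n$, the $l$-th SE-diagonal of $(a_{i,j})$ is the sequence $(a_{l,l},a_{l-1,l},\ldots,a_{1,l})$, and the $l$-th NE-diagonal is the sequence $(a_{1,l},a_{2,l+1},\ldots,a_{n-l+1,n})$. *)

(* Defs.v *)
From mathcomp Require Import all_boot.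
Set Implicit Arguments. Unset Strict Implicit. Unset Printing Implicit Defensive.

(* An array (a_{i,j}) indexed 1-based; only entries with 1 <= i <= j <= n matter.
   Convention: an array "in T_n" is zero outside its domain, so that equality of
   arrays is Leibniz equality of functions. *)
Definition arr := nat -> nat -> nat.

Definition in_dom (n i j : nat) : bool := [&& 1 <= i, i <= j & j <= n].

Definition monotone_triangle (n : nat) (a : arr) : Prop :=
  (forall i j, 1 <= i -> i <= j -> j < n -> a i j <= a i.+1 j.+1) /\
  (forall i j, 1 < i -> i <= j -> j <= n -> a i j <= a i.-1 j) /\
  (forall i j, 1 <= i -> i <= j -> j <= n - 1 -> a i j < a i j.+1).

Definition complete (n : nat) (a : arr) : Prop :=
  forall j, 1 <= j <= n -> a 1 j = j.

Definition inT (n : nat) (a : arr) : Prop :=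
  monotone_triangle n a /\ complete n a /\
  (forall i j, ~~ in_dom n i j -> a i j = 0).

(* row i of a (counted from the bottom): (a_{i,i},...,a_{i,n}) *)
Definition row (n : nat) (a : arr) (i : nat) : seq nat :=
  [seq a i m | m <- iota i (n.+1 - i)].

Definition SEdiag (a : arr) (j : nat) : seq nat := [seq a k j | k <- iota 1 j].

Definition NEdiag (n : nat) (a : arr) (l : nat) : seq nat :=
  [seq a k (l + k).-1 | k <- iota 1 (n.+1 - l)].

Definition AD (n : nat) (a : arr) : arr := fun i j =>
  if in_dom n i j then count (fun x => i <= x) (SEdiag a j) else 0.

Definition Rmap (n : nat) (a : arr) : arr := fun i j =>
  if in_dom n i j then count (fun x => x <= n.+1 - i) (NEdiag n a (n.+1 - j)) else 0.

(* Row k of H(A) is the increasing enumeration of {1..n} minus the entries of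
   row n+2-k of A (for k = 1 the latter row is empty, giving (1,...,n)). *)
Definition Hrow (n : nat) (a : arr) (k : nat) : seq nat :=
  [seq x <- iota 1 n | x \notin row n a (n.+2 - k)].

Definition Hmap (n : nat) (a : arr) : arr := fun i j =>
  if in_dom n i j then nth 0 (Hrow n a i) (j - i) else 0.

Definition perm_of_T (n : nat) (f : arr -> arr) : Prop :=
  (forall a, inT n a -> inT n (f a)) /\
  (forall a b, inT n a -> inT n b -> f a = f b -> a = b) /\
  (forall b, inT n b -> exists a, inT n a /\ f a = b).

(* Main.v *)
Require Import Defs.
From mathcomp Require Import all_boot.
From Stdlib Require Import Lia FunctionalExtensionality.
Set Implicit Arguments. Unset Strict Implicit. Unset Printing Implicit Defensive.
Ltac mlia := repeat (match goal with
 | H : is_true (_ <= _) |- _ => let H' := fresh "L" in pose proof (elimT leP H) as H'; clear H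
 | H : is_true (_ && _) |- _ => let H1 := fresh "A" in let H2 := fresh "A" in destruct (andP H) as [H1 H2]; clear H
 | |- is_true (_ <= _) => apply/leP
 | |- is_true (_ && _) => apply/andP; split
 | |- (?b = true) => change (is_true b)
 | H : context [addn ?x ?y] |- _ => rewrite -plusE in H
 | H : context [subn ?x ?y] |- _ => rewrite -minusE in H
 | H : context [muln ?x ?y] |- _ => rewrite -multE in H
 | |- context [addn ?x ?y] => rewrite -plusE
 | |- context [subn ?x ?y] => rewrite -minusE
 end); lia.
Lemma sorted_nth_le (s : seq nat) t x : sorted ltn s -> t < size s ->
  (nth 0 s t <= x) = (t < count (fun z => z <= x) s).
Proof.
elim: s t => [|h s IH] t //= Hs Ht.
have Hs' : sorted ltn s := path_sorted Hs.
have Hmin : forall z, z \in s -> h < z.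
  by move=> z; apply/allP: z; exact: (order_path_min ltn_trans Hs).
case: (leqP h x) => hx.
  case: t Ht => [|t] Ht /=; first by rewrite hx.
  by rewrite IH // add1n ltnS.
have -> : count (fun z => z <= x) s = 0.
  rewrite (@eq_in_count _ _ pred0) ?count_pred0 //.
  move=> z /Hmin hz /=; apply/negbTE; rewrite -ltnNge; exact: ltn_trans hx hz.
rewrite addn0 /=.
case: t Ht => [|t] Ht /=; first by rewrite leqNgt hx.
apply/negbTE; rewrite -ltnNge.
have hin : nth 0 s t \in s by apply: mem_nth.
exact: ltn_trans hx (Hmin _ hin).
Qed.

Lemma down_P (P : pred nat) m len :
  (forall k, m <= k -> k.+1 < m + len -> P k.+1 -> P k) ->
  forall t, t < len -> P (m + t) -> P m.
Proof.
move=> Hd; elim=> [|t IH] Ht; first by rewrite addn0.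
move=> Pt; apply: IH; first exact: ltnW.
apply: Hd; [exact: leq_addr | by rewrite -addnS ltn_add2l | by rewrite -addnS].
Qed.

Lemma count_down (P : pred nat) m len :
  (forall k, m <= k -> k.+1 < m + len -> P k.+1 -> P k) ->
  forall y, y < len -> (count P (iota m len) <= y) = ~~ P (m + y).
Proof.
elim: len m => [|l IH] m Hd y Hy //=.
have Hd' : forall k, m.+1 <= k -> k.+1 < m.+1 + l -> P k.+1 -> P k.
  move=> k hk hk2; apply: Hd; [exact: ltnW | by rewrite addnS -addSn].
case: y Hy => [|y] Hy.
  rewrite addn0; case: (boolP (P m)) => Pm //=.
  rewrite add0n leqn0; case: l IH Hd Hd' Hy => [|l] IH Hd Hd' Hy //.
  apply/eqP/eqP; rewrite -leqn0 (IH _ Hd' 0) // addn0; apply/negP => P1.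
  move/negP: Pm; apply; by apply: Hd => //; rewrite !addnS !ltnS leq_addr.
have Hy' : y < l by [].
case: (boolP (P m)) => Pm /=.
  by rewrite add1n ltnS (IH _ Hd' y Hy') addSnnS.
rewrite add0n.
have nP : ~~ P (m + y.+1).
  apply/negP => Pmy; move/negP: Pm; apply.
  apply: (@down_P P m l.+1) Pmy => //.
rewrite nP; apply: (leq_trans _ (leqnSn _)); by rewrite (IH _ Hd' y Hy') addSnnS.
Qed.

Lemma le_ext (u v j : nat) : u <= j -> v <= j ->
  (forall x, x < j -> (u <= x) = (v <= x)) -> u = v.
Proof.
move=> hu hv H; apply/eqP; rewrite eqn_leq; apply/andP; split.
  case: (ltnP v j) => hvj; first by rewrite H.
  exact: leq_trans hu hvj.
case: (ltnP u j) => huj; first by rewrite -H.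
exact: leq_trans hv huj.
Qed.

Lemma sorted_map_iota (f : nat -> nat) k len :
  (forall m, k <= m -> m.+1 < k + len -> f m < f m.+1) ->
  sorted ltn [seq f m | m <- iota k len].
Proof.
elim: len k => [|l IH] k H //=.
case: l IH H => [|l] IH H //=.
apply/andP; split; first by apply: H => //; mlia.
have := IH k.+1; rewrite /=; apply=> m hm hm2; apply: H; mlia.
Qed.

Lemma nth_map_iota (f : nat -> nat) k len p : k <= p -> p < k + len ->
  nth 0 [seq f m | m <- iota k len] (p - k) = f p.
Proof.
move=> h1 h2; rewrite (nth_map 0); last by rewrite size_iota; mlia.
by rewrite nth_iota ?subnKC //; mlia.
Qed.

Lemma count_iota_le x n : x <= n -> count (fun z => z <= x) (iota 1 n) = x.
Proof.
move=> hx; rewrite -(subnKC hx) iotaD count_cat.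
rewrite (@eq_in_count _ _ predT); last first.
  by move=> z; rewrite mem_iota => /andP [h1 h2]; change (is_true (z <= x)); mlia.
rewrite count_predT size_iota (@eq_in_count _ _ pred0); last first.
  by move=> z; rewrite mem_iota => /andP [h1 h2]; apply/negbTE; rewrite -ltnNge; mlia.
by rewrite count_pred0 addn0.
Qed.

Lemma filter_mem_iota (s : seq nat) n : sorted ltn s -> (forall z, z \in s -> 1 <= z <= n) ->
  [seq z <- iota 1 n | z \in s] = s.
Proof.
move=> Hs Hr; apply: (irr_sorted_eq ltn_trans ltnn).
- apply: sorted_filter; [exact: ltn_trans | exact: iota_ltn_sorted].
- exact: Hs.
move=> z; rewrite mem_filter mem_iota; case: (boolP (z \in s)) => //= /Hr h; mlia.
Qed.

Lemma count_add (a b c : pred nat) l : (forall z, a z + b z = c z) ->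
  count a l + count b l = count c l.
Proof. move=> H; elim: l => //= h l IH; by rewrite -IH -H addnACA. Qed.

Lemma compl_count (s : seq nat) n x : sorted ltn s -> (forall z, z \in s -> 1 <= z <= n) ->
  x <= n ->
  count (fun z => z <= x) [seq z <- iota 1 n | z \notin s] + count (fun z => z <= x) s = x.
Proof.
move=> Hs Hr hx.
transitivity (count (fun z => z <= x) (iota 1 n)); last exact: count_iota_le hx.
rewrite -{2}(filter_mem_iota Hs Hr) !count_filter.
apply: count_add => z /=; by case: (z \in s); case: (z <= x).
Qed.

Lemma map_nth_iota (s : seq nat) m :
  [seq nth 0 s (p - m) | p <- iota m (size s)] = s.
Proof.
have -> : iota m (size s) = [seq m + i | i <- iota 0 (size s)] by rewrite -iotaDl addn0.
rewrite -map_comp.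
rewrite (@eq_map _ _ _ (nth 0 s)); first by rewrite -/(mkseq _ _) mkseq_nth.
by move=> p /=; rewrite addKn.
Qed.


Definition Ncnt n (a : arr) k x := count (fun z => z <= x) (row n a k).

Section Tri.
Variables (n : nat) (a : arr).
Hypothesis Ha : inT n a.

Lemma Hne i j : 1 <= i -> i <= j -> j < n -> a i j <= a i.+1 j.+1.
Proof. by case: Ha => [[H _] _]; apply: H. Qed.
Lemma Hcol i j : 1 < i -> i <= j -> j <= n -> a i j <= a i.-1 j.
Proof. by case: Ha => [[_ [H _]] _]; apply: H. Qed.
Lemma Hstr i j : 1 <= i -> i <= j -> j <= n - 1 -> a i j < a i j.+1.
Proof. by case: Ha => [[_ [_ H]] _]; apply: H. Qed.
Lemma Hcomp j : 1 <= j <= n -> a 1 j = j.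
Proof. by case: Ha => [_ [H _]]; apply: H. Qed.
Lemma Hzero i j : ~~ in_dom n i j -> a i j = 0.
Proof. by case: Ha => [_ [_ H]]; apply: H. Qed.

Lemma a_le_p k p : 1 <= k -> k <= p -> p <= n -> a k p <= p.
Proof.
elim: k => [|k IH] // hk hkp hpn.
case: k IH hk hkp => [|k] IH hk hkp; first by rewrite Hcomp //; mlia.
apply: (leq_trans (@Hcol k.+2 p isT hkp hpn)).
apply: IH => //; mlia.
Qed.

Lemma a_ge k p : 1 <= k -> k <= p -> p <= n -> p < a k p + k.
Proof.
elim: k p => [|k IH] p // hk hkp hpn.
case: k IH hk hkp => [|k] IH hk hkp; first by rewrite Hcomp ?addn1 //; mlia.
have hp : 0 < p by mlia.
have := Hne (i:=k.+1) (j:=p.-1); rewrite prednK //.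
move=> /(_ isT) h; have h2 := IH p.-1 isT.
have h3 : a k.+1 p.-1 <= a k.+2 p by apply: h; mlia.
have h4 : p.-1 < a k.+1 p.-1 + k.+1 by apply: h2; mlia.
mlia.
Qed.

Lemma a_ge1 k p : 1 <= k -> k <= p -> p <= n -> 1 <= a k p.
Proof. move=> h1 h2 h3; have h := a_ge h1 h2 h3; mlia. Qed.

Lemma row_sorted k : 1 <= k -> sorted ltn (row n a k).
Proof. move=> hk; apply: sorted_map_iota => m h1 h2; apply: Hstr => //; mlia. Qed.

Lemma row_mem k z : 1 <= k -> z \in row n a k -> 1 <= z <= n.
Proof.
move=> hk /mapP [p]; rewrite mem_iota => /andP [h1 h2] ->.
have hp : p <= n by mlia.
by rewrite a_ge1 //= (leq_trans (a_le_p hk h1 hp) hp).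
Qed.

Lemma size_row k : size (row n a k) = n.+1 - k.
Proof. by rewrite size_map size_iota. Qed.

Lemma rowchar k p x : 1 <= k -> k <= p -> p <= n ->
  (a k p <= x) = (p - k < Ncnt n a k x).
Proof.
move=> h1 h2 h3; rewrite /Ncnt -sorted_nth_le ?row_sorted //; last by rewrite size_row; mlia.
by rewrite nth_map_iota //; mlia.
Qed.

Lemma N_le k x : Ncnt n a k x <= n.+1 - k.
Proof. by rewrite /Ncnt -size_row count_size. Qed.

Lemma row1 : row n a 1 = iota 1 n.
Proof.
rewrite /row subn1 /= -[RHS]map_id; apply/eq_in_map => p; rewrite mem_iota => /andP [h1 h2].
by rewrite Hcomp //; mlia.
Qed.

Lemma row_last : row n a n.+1 = [::].
Proof. by rewrite /row subnn. Qed.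

Lemma interlace k x : 1 <= k <= n ->
  Ncnt n a k.+1 x <= Ncnt n a k x /\ Ncnt n a k x <= (Ncnt n a k.+1 x).+1.
Proof.
move=> /andP [hk1 hkn].
case: (ltnP k n) => hkn'; last first.
  have -> : k = n by mlia.
  rewrite /Ncnt row_last /=; have := N_le n x; rewrite /Ncnt => h; split => //; mlia.
have hkn2 : k.+1 <= n by [].
split.
- have hs := N_le k.+1 x.
  move Es : (Ncnt n a k.+1 x) hs => s hs.
  case: (posnP s) => [-> //|hs0].
  have h1 : a k.+1 (k + s) <= x.
    rewrite rowchar //; [rewrite Es; mlia | mlia | mlia].
  have h2 : a k (k + s).-1 <= a k.+1 (k + s).-1.+1 by apply: Hne; mlia.
  rewrite prednK in h2; last by mlia.
  have : a k (k + s).-1 <= x by exact: leq_trans h2 h1.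
  rewrite rowchar //; [move=> h; mlia | mlia | mlia].
- have ht := N_le k x.
  move Et : (Ncnt n a k x) ht => t ht.
  case: (leqP t 1) => ht1; first by mlia.
  have h1 : a k (k + t).-1 <= x.
    rewrite rowchar //; [rewrite Et; mlia | mlia | mlia].
  have h2 : a k.+1 (k + t).-1 <= a k (k + t).-1 by apply: Hcol; mlia.
  have : a k.+1 (k + t).-1 <= x by exact: leq_trans h2 h1.
  rewrite rowchar //; [move=> h; mlia | mlia | mlia].
Qed.

End Tri.


Lemma in_domE n i j : in_dom n i j = [&& 1 <= i, i <= j & j <= n].
Proof. by []. Qed.

Lemma AD_le n a i j : AD n a i j <= j.
Proof.
rewrite /AD; case: (in_dom n i j) => //.
by rewrite /SEdiag (leq_trans (count_size _ _)) // size_map size_iota.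
Qed.

Lemma ADchar n a i j y : inT n a -> 1 <= i -> i <= j -> j <= n -> y < j ->
  (AD n a i j <= y) = (a y.+1 j < i).
Proof.
move=> Ha h1 h2 h3 hy.
rewrite /AD in_domE h1 h2 h3 /= /SEdiag count_map.
rewrite (@count_down (fun k => i <= a k j) 1 j) //; first by rewrite ltnNge.
move=> k hk hk2 /= hP; apply: (leq_trans hP).
have := @Hcol n a Ha k.+1 j; apply => //; mlia.
Qed.

Lemma AD_T n a : inT n a -> inT n (AD n a).
Proof.
move=> Ha; split; [split; [|split] | split].
- move=> i j h1 h2 h3.
  case: (leqP j (AD n a i.+1 j.+1)) => hy; first exact: leq_trans (AD_le _ _ _ _) hy.
  rewrite ADchar //; last by mlia.
  have H : a (AD n a i.+1 j.+1).+1 j.+1 < i.+1.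
    by rewrite -(@ADchar n a i.+1 j.+1 (AD n a i.+1 j.+1) Ha) //; mlia.
  apply: leq_trans (Hstr Ha _ _ _) _; [mlia | mlia | mlia | mlia].
- move=> i j h1 h2 h3.
  rewrite /AD !in_domE.
  rewrite (_ : [&& 1 <= i, i <= j & j <= n] = true); last by mlia.
  rewrite (_ : [&& 1 <= i.-1, i.-1 <= j & j <= n] = true); last by mlia.
  apply: sub_count => z /= hz; mlia.
- move=> i j h1 h2 h3.
  set y := AD n a i j.
  have hyj : y <= j by apply: AD_le.
  have hy1 : 0 < y.
    rewrite lt0n; apply/negP => /eqP y0.
    have : AD n a i j <= 0 by rewrite -/y y0.
    rewrite ADchar //; [|mlia|mlia].
    rewrite (Hcomp Ha); [move=> h; mlia | mlia].
  have hay : i <= a y j.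
    have : ~~ (AD n a i j <= y.-1) by rewrite -/y -ltnNge prednK.
    rewrite ADchar //; try mlia.
    by rewrite prednK // -leqNgt.
  rewrite ltnNge ADchar //; try mlia.
  rewrite -leqNgt; apply: leq_trans hay _; apply: (Hne Ha); mlia.
- move=> j hj; rewrite /AD in_domE hj /= /SEdiag count_map.
  have hj1 : 1 <= j by mlia.
  rewrite (@eq_in_count _ _ predT); first by rewrite count_predT size_iota.
  move=> k; rewrite mem_iota => /andP [k1 k2].
  change (is_true (0 < a k j)); apply: (a_ge1 Ha); mlia.
- by move=> i j /negbTE hd; rewrite /AD hd.
Qed.

Lemma AD_inv n a : inT n a -> AD n (AD n a) = a.
Proof.
move=> Ha; have Hb := AD_T Ha.
apply: functional_extensionality => i; apply: functional_extensionality => j.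
case hd: (in_dom n i j); last by rewrite /AD hd (Hzero Ha) ?hd.
move: hd; rewrite in_domE => /and3P [h1 h2 h3].
apply: (@le_ext _ _ j); [exact: AD_le | exact: (a_le_p Ha h1 h2 h3) | ].
move=> x hx.
rewrite ADchar //.
have -> : (AD n a x.+1 j < i) = (AD n a x.+1 j <= i.-1) by rewrite -(prednK h1) ltnS.
rewrite ADchar //; try mlia.
by rewrite prednK.
Qed.


Lemma Hrow_sorted n a i : sorted ltn (Hrow n a i).
Proof. apply: sorted_filter; [exact: ltn_trans | exact: iota_ltn_sorted]. Qed.

Lemma Hrow_mem n a i z : z \in Hrow n a i -> 1 <= z <= n.
Proof. rewrite mem_filter mem_iota => /andP [_ h]; mlia. Qed.

Lemma Hrow_count n a i x : inT n a -> 1 <= i <= n.+1 -> x <= n ->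
  count (fun z => z <= x) (Hrow n a i) + Ncnt n a (n.+2 - i) x = x.
Proof.
move=> Ha hi hx; apply: compl_count => //.
- apply: (row_sorted Ha); mlia.
- move=> z; apply: (row_mem Ha); mlia.
Qed.

Lemma count_all_le (s : seq nat) x : (forall z, z \in s -> z <= x) ->
  count (fun z => z <= x) s = size s.
Proof. by move=> H; apply/eqP; rewrite -all_count; apply/allP. Qed.

Lemma Hrow_size n a i : inT n a -> 1 <= i <= n.+1 -> size (Hrow n a i) = n.+1 - i.
Proof.
move=> Ha hi; have := Hrow_count Ha hi (leqnn n).
rewrite count_all_le; last by move=> z /Hrow_mem h; mlia.
rewrite /Ncnt count_all_le; last by move=> z hz; have h := row_mem Ha (k:=n.+2 - i) (z:=z) (ltac:(mlia)) hz; mlia.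
rewrite size_row; mlia.
Qed.

Lemma row_H n a m : inT n a -> 1 <= m <= n.+1 -> row n (Hmap n a) m = Hrow n a m.
Proof.
move=> Ha hm; rewrite /row /Hmap.
rewrite -{2}(map_nth_iota (Hrow n a m) m) Hrow_size //.
apply/eq_in_map => p; rewrite mem_iota => /andP [h1 h2].
by rewrite in_domE (_ : [&& 1 <= m, m <= p & p <= n] = true) //; mlia.
Qed.

Lemma Hchar n a i j x : inT n a -> 1 <= i -> i <= j -> j <= n ->
  (Hmap n a i j <= x) = (j - i < count (fun z => z <= x) (Hrow n a i)).
Proof.
move=> Ha h1 h2 h3; rewrite /Hmap in_domE h1 h2 h3 /= sorted_nth_le //.
  exact: Hrow_sorted.
rewrite Hrow_size //; mlia.
Qed.

Lemma Hrow1 n a : Hrow n a 1 = iota 1 n.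
Proof.
rewrite /Hrow subSS subn0 row_last (@eq_filter _ _ predT) ?filter_predT //.
Qed.

Lemma Hmap_mem n a i j : inT n a -> 1 <= i -> i <= j -> j <= n -> Hmap n a i j <= n.
Proof.
move=> Ha h1 h2 h3; rewrite /Hmap in_domE h1 h2 h3 /=.
have : nth 0 (Hrow n a i) (j - i) \in Hrow n a i by apply: mem_nth; rewrite Hrow_size //; mlia.
move/Hrow_mem => h; mlia.
Qed.

Lemma H_T n a : inT n a -> inT n (Hmap n a).
Proof.
move=> Ha; split; [split; [|split] | split].
- move=> i j h1 h2 h3.
  set x := Hmap n a i.+1 j.+1.
  have hx : x <= n by apply: (Hmap_mem Ha); mlia.
  have H1 : j.+1 - i.+1 < count (fun z => z <= x) (Hrow n a i.+1) by rewrite -Hchar //; mlia.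
  rewrite Hchar //; try mlia.
  have c1 := Hrow_count Ha (i:=i) (x:=x); have c2 := Hrow_count Ha (i:=i.+1) (x:=x).
  have e1 : n.+2 - i = (n.+1 - i).+1 by mlia.
  have e2 : n.+2 - i.+1 = n.+1 - i by mlia.
  rewrite e1 in c1; rewrite e2 in c2.
  have [il _] := interlace Ha (k:=n.+1 - i) x (ltac:(mlia)).
  have c1' := c1 (ltac:(mlia)) hx; have c2' := c2 (ltac:(mlia)) hx.
  mlia.
- move=> i j h1 h2 h3.
  set x := Hmap n a i.-1 j.
  have hx : x <= n by apply: (Hmap_mem Ha); mlia.
  have H1 : j - i.-1 < count (fun z => z <= x) (Hrow n a i.-1) by rewrite -Hchar //; mlia.
  rewrite Hchar //; try mlia.
  have c1 := Hrow_count Ha (i:=i) (x:=x); have c2 := Hrow_count Ha (i:=i.-1) (x:=x).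
  have e2 : n.+2 - i.-1 = (n.+2 - i).+1 by mlia.
  rewrite e2 in c2.
  have [_ il] := interlace Ha (k:=n.+2 - i) x (ltac:(mlia)).
  have c1' := c1 (ltac:(mlia)) hx; have c2' := c2 (ltac:(mlia)) hx.
  mlia.
- move=> i j h1 h2 h3.
  rewrite /Hmap !in_domE.
  rewrite (_ : [&& 1 <= i, i <= j & j <= n] = true); last by mlia.
  rewrite (_ : [&& 1 <= i, i <= j.+1 & j.+1 <= n] = true); last by mlia.
  have hs := Hrow_size Ha (i:=i) (ltac:(mlia)).
  apply: (sorted_ltn_nth ltn_trans 0 (Hrow_sorted n a i)); rewrite ?inE ?hs; mlia.
- move=> j hj; rewrite /Hmap in_domE hj /= Hrow1 nth_iota; mlia.
- by move=> i j /negbTE hd; rewrite /Hmap hd.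
Qed.

Lemma Hrow_HH n a i : inT n a -> 1 <= i <= n -> Hrow n (Hmap n a) i = row n a i.
Proof.
move=> Ha hi.
rewrite /Hrow row_H //; last by mlia.
rewrite /Hrow subKn; last by mlia.
rewrite -[RHS](@filter_mem_iota _ n); last first.
- move=> z; apply: (row_mem Ha); mlia.
- apply: (row_sorted Ha); mlia.
apply/eq_in_filter => z hz; by rewrite mem_filter hz andbT negbK.
Qed.

Lemma H_inv n a : inT n a -> Hmap n (Hmap n a) = a.
Proof.
move=> Ha.
apply: functional_extensionality => i; apply: functional_extensionality => j.
case hd: (in_dom n i j); last by rewrite /Hmap hd (Hzero Ha) ?hd.
move: (hd); rewrite in_domE => /and3P [h1 h2 h3].
rewrite /Hmap hd (Hrow_HH Ha); last by mlia.
rewrite nth_map_iota //; mlia.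
Qed.

Lemma H_cond n a i x : inT n a -> 1 <= i <= n ->
  (x \in row n a i) || (x \in row n (Hmap n a) (n.+2 - i)) = (1 <= x <= n).
Proof.
move=> Ha hi; rewrite row_H //; last by mlia.
rewrite /Hrow subKn; last by mlia.
rewrite mem_filter mem_iota.
case: (boolP (x \in row n a i)) => hx /=.
  have := row_mem Ha (k:=i) (z:=x); move=> h; symmetry; apply: h => //; mlia.
by rewrite add1n ltnS.
Qed.


Lemma Rchar n a i j y : inT n a -> 1 <= i -> i <= j -> j <= n -> y < j ->
  (Rmap n a i j <= y) = (Ncnt n a y.+1 (n.+1 - i) <= n - j).
Proof.
move=> Ha h1 h2 h3 hy.
rewrite /Rmap in_domE h1 h2 h3 /= /NEdiag count_map.
have -> : n.+1 - (n.+1 - j) = j by mlia.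
rewrite (@count_down (fun k => a k (n.+1 - j + k).-1 <= n.+1 - i) 1 j) //.
  have e : (n.+1 - j + (1 + y)).-1 = n - j + y.+1 by mlia.
  rewrite add1n e (rowchar Ha); try mlia.
  by rewrite addnK -leqNgt.
move=> k hk hk2 /= hP; apply: leq_trans hP.
have e1 : (n.+1 - j + k.+1).-1 = ((n.+1 - j + k).-1).+1 by mlia.
rewrite e1; apply: (Hne Ha); mlia.
Qed.

Lemma R_le n a i j : j <= n -> Rmap n a i j <= j.
Proof.
move=> hj; rewrite /Rmap; case: (in_dom n i j) => //.
rewrite (leq_trans (count_size _ _)) // size_map size_iota; mlia.
Qed.

Lemma R1 n a j : inT n a -> 1 <= j <= n -> Rmap n a 1 j = j.
Proof.
move=> Ha hj; rewrite /Rmap in_domE hj /= /NEdiag count_map.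
have -> : n.+1 - (n.+1 - j) = j by mlia.
rewrite (@eq_in_count _ _ predT); first by rewrite count_predT size_iota.
move=> k; rewrite mem_iota => /andP [k1 k2].
change (is_true (a k (n.+1 - j + k).-1 <= n.+1 - 1)).
have h := @a_le_p n a Ha k (n.+1 - j + k).-1 (ltac:(mlia)) (ltac:(mlia)) (ltac:(mlia)).
mlia.
Qed.

Lemma transp n a m y : inT n a -> 2 <= m -> m <= n -> y < n ->
  Ncnt n (AD n a) m y + m = Ncnt n a y.+1 m.-1 + y.+1.
Proof.
move=> Ha hm1 hm2 hy; have Hb := AD_T Ha.
have hU := @N_le n (AD n a) m y.
have hV := @N_le n a y.+1 m.-1.
move EU : (Ncnt n (AD n a) m y) hU => U hU.
move EV : (Ncnt n a y.+1 m.-1) hV => V hV.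
have hlow : m.-1 <= V + y.
  case: (leqP m.-1 y) => hmy; first by mlia.
  have : a y.+1 m.-1 <= m.-1 by apply: (a_le_p Ha); mlia.
  rewrite (rowchar Ha); try mlia.
  rewrite EV => h; mlia.
have key : forall p, m <= p -> p <= n -> (p <= U + m.-1) = (p <= V + y).
  move=> p hp1 hp2.
  have e1 : (p <= U + m.-1) = (AD n a m p <= y).
    rewrite (rowchar Hb); try mlia.
    rewrite EU; apply/idP/idP => h; mlia.
  rewrite e1.
  case: (leqP p y) => hpy.
    rewrite (_ : AD n a m p <= y); last exact: leq_trans (@AD_le n a m p) hpy.
    symmetry; mlia.
  rewrite (ADchar Ha); try mlia.
  have hm0 : 0 < m by mlia.
  rewrite -{1}(prednK hm0) ltnS.
  rewrite (rowchar Ha); try mlia.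
  rewrite EV; apply/idP/idP => h; mlia.
case: (ltngtP (U + m.-1) (V + y)) => hc.
- have := key (U + m.-1).+1 (ltac:(mlia)) (ltac:(mlia)).
  by rewrite ltnn hc.
- have := key (V + y).+1 (ltac:(mlia)) (ltac:(mlia)).
  by rewrite ltnn hc.
- mlia.
Qed.

Lemma Xlem n a : inT n a -> Rmap n a = Hmap n (AD n a).
Proof.
move=> Ha; have Hb := AD_T Ha; have Hd := H_T Hb.
apply: functional_extensionality => i; apply: functional_extensionality => j.
case hd: (in_dom n i j); last by rewrite /Rmap /Hmap hd.
move: (hd); rewrite in_domE => /and3P [h1 h2 h3].
case: (leqP i 1) => hi.
  have e : i = 1 by mlia.
  rewrite e R1 //; last by mlia.
  rewrite (Hcomp Hd) //; mlia.
apply: (@le_ext _ _ j); [exact: R_le | exact: (a_le_p Hd h1 h2 h3) | ].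
move=> y hy.
rewrite (Rchar Ha) // (Hchar _ Hb) //.
have c := Hrow_count (n:=n) (a:=AD n a) (i:=i) (x:=y) Hb (ltac:(mlia)) (ltac:(mlia)).
have t := transp (n:=n) (a:=a) (m:=n.+2 - i) (y:=y) Ha (ltac:(mlia)) (ltac:(mlia)) (ltac:(mlia)).
have e : (n.+2 - i).-1 = n.+1 - i by mlia.
rewrite e in t.
apply/idP/idP => h; mlia.
Qed.


Theorem mainTheorem2 (n : nat) (hn : 1 <= n) :
  perm_of_T n (AD n) /\ perm_of_T n (Rmap n) /\ perm_of_T n (Hmap n) /\
  (* H(A) satisfies the defining condition of the paper *)
  (forall a, inT n a -> forall i, 1 <= i <= n -> forall x,
       (x \in row n a i) || (x \in row n (Hmap n a) (n.+2 - i)) = (1 <= x <= n)) /\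
  (forall a, inT n a -> AD n a = Hmap n (Rmap n a)).
Proof.
split; [|split; [|split; [|split]]].
- split; [exact: AD_T | split].
  + move=> a b Ha Hb E; by rewrite -(AD_inv Ha) E (AD_inv Hb).
  + move=> b Hb; exists (AD n b); split; [exact: AD_T | exact: AD_inv].
- split; [move=> a Ha; rewrite (Xlem Ha); exact: H_T (AD_T Ha) | split].
  + move=> a b Ha Hb; rewrite (Xlem Ha) (Xlem Hb) => E.
    have E2 : AD n a = AD n b by rewrite -(H_inv (AD_T Ha)) E (H_inv (AD_T Hb)).
    by rewrite -(AD_inv Ha) E2 (AD_inv Hb).
  + move=> c Hc; exists (AD n (Hmap n c)).
    have H1 : inT n (AD n (Hmap n c)) by apply: AD_T; exact: H_T.
    split => //; rewrite (Xlem H1) (AD_inv (H_T Hc)); exact: H_inv.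
- split; [exact: H_T | split].
  + move=> a b Ha Hb E; by rewrite -(H_inv Ha) E (H_inv Hb).
  + move=> b Hb; exists (Hmap n b); split; [exact: H_T | exact: H_inv].
- move=> a Ha i hi x; exact: H_cond.
- move=> a Ha; by rewrite (Xlem Ha) (H_inv (AD_T Ha)).
Qed.
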